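(* Let $\lambda=\bar p/(1-\bar p)$, $\pi=(1+\lambda)\mu(I-D_pK)$ and $\mathbf r=\big(I-K+\frac{(\mathbf 1-\mathbf p)\mu D_{1-p}K}{1-\bar p}\big)^{-1}\mathbf p-\lambda\mathbf 1$. Then $\pi\cdot\mathbf r=0$.
   Context: Let $\mathcal R=\{1,\dots,N\}$ and let $K$ be a stochastic matrix on $\mathcal R$ whose Markov chain has a unique closed irreducible subset; let $\mu$ (row vector) be its unique stationary distribution. Fix $p:\mathcal R\to(0,1)$, $\mathbf p=(p(1),\dots,p(N))^t$, $\mathbf 1$ the all-ones column vector, $I$ the identity, $D_p$ the diagonal matrix with entries $p(i)$, $D_{1-p}=I-D_p$, $\bar p=\mu\cdot\mathbf p$. *)

(* Defs.v *)
From mathcomp Require Import all_boot all_order all_algebra.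
Set Implicit Arguments. Unset Strict Implicit. Unset Printing Implicit Defensive.
Import Order.TTheory GRing.Theory Num.Theory.
Local Open Scope ring_scope.

Definition stochastic (R : realFieldType) (N : nat) (K : 'M[R]_N) : Prop :=
  (forall i j, 0 <= K i j) /\ (forall i, \sum_j K i j = 1).

Definition trans_rel (R : realFieldType) (N : nat) (K : 'M[R]_N) : rel 'I_N :=
  fun i j => 0 < K i j.

Definition closed_set (R : realFieldType) (N : nat) (K : 'M[R]_N) (C : {set 'I_N}) : Prop :=
  forall i j, i \in C -> 0 < K i j -> j \in C.

Definition irreducible_set (R : realFieldType) (N : nat) (K : 'M[R]_N) (C : {set 'I_N}) : Prop :=
  C != set0 /\ forall i j, i \in C -> j \in C -> connect (trans_rel K) i j.

Definition unique_closed_irreducible (R : realFieldType) (N : nat) (K : 'M[R]_N) : Prop :=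
  exists C : {set 'I_N},
    (closed_set K C /\ irreducible_set K C) /\
    forall C', closed_set K C' -> irreducible_set K C' -> C' = C.

Definition stationary_distribution (R : realFieldType) (N : nat) (K : 'M[R]_N) (mu : 'rV[R]_N) : Prop :=
  (forall i, 0 <= mu 0 i) /\ \sum_i mu 0 i = 1 /\ mu *m K = mu.

(* Main.v *)
Require Import Defs.
From mathcomp Require Import all_boot all_order all_algebra.
Import Order.TTheory GRing.Theory Num.Theory.
Local Open Scope ring_scope.

Lemma unit_of_ker (F : fieldType) n (A : 'M[F]_n) :
  (forall x : 'rV_n, x *m A = 0 -> x = 0) -> A \in unitmx.
Proof.
move=> H; rewrite -row_free_unit -kermx_eq0; apply/eqP/row_matrixP => i.
rewrite row0; apply: H; apply/sub_kermxP; exact: row_sub.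
Qed.

Lemma ex_max (R : realFieldType) N (f : 'I_N -> R) (i0 : 'I_N) : exists i, forall j, f j <= f i.
Proof.
case: (@Order.TotalTheory.arg_maxP _ _ _ i0 xpredT f isT) => i _ H.
by exists i => j; apply: H.
Qed.

Lemma smxB (R: comNzRingType) n (a b : R) : (a - b)%:M = a%:M - b%:M :> 'M[R]_n.
Proof. by rewrite raddfB. Qed.

Section G.
Variables (R : realFieldType) (N : nat) (K : 'M[R]_N).

Lemma reach_sub (S : {set 'I_N}) i j : closed_set K S ->
  connect (trans_rel K) i j -> i \in S -> j \in S.
Proof.
move=> cS /connectP [q Hq ->]; elim: q i Hq => [|a q IH] i //= /andP [Hia Hq] iS.
apply: IH Hq _; exact: cS Hia.
Qed.

Lemma closed_contains (S : {set 'I_N}) (C : {set 'I_N}) i0 :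
  closed_set K S -> i0 \in S ->
  (forall C', closed_set K C' -> irreducible_set K C' -> C' = C) ->
  C \subset S.
Proof.
move=> cS i0S uC.
pose reach i := [set j | connect (trans_rel K) i j].
case: (@arg_minnP _ i0 (mem S) (fun i => #|reach i|) i0S) => i iS imin.
have rS : reach i \subset S by apply/subsetP => j; rewrite inE => /reach_sub; apply.
have cR : closed_set K (reach i).
  move=> j k; rewrite !inE => hij hjk; apply: connect_trans hij _; exact: connect1.
have iR : irreducible_set K (reach i).
  split; first by apply/set0Pn; exists i; rewrite inE connect0.
  move=> j k jR kR.
  have sub : reach j \subset reach i.
    apply/subsetP => l; rewrite !inE => hjl; move: jR; rewrite inE => hij.
    exact: connect_trans hij hjl.
  have := geq_leqif (subset_leqif_cards sub).
  rewrite imin; last exact: (subsetP rS).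
  by move=> /esym /eqP eq; move: kR; rewrite -eq inE.
by rewrite -(uC _ cR iR).
Qed.
End G.

Section H.
Variables (R : realFieldType) (N : nat) (K : 'M[R]_N).
Hypothesis hK : stochastic K.
Variables (C : {set 'I_N}) (c0 : 'I_N).
Hypothesis c0C : c0 \in C.
Hypothesis uC : forall C', closed_set K C' -> irreducible_set K C' -> C' = C.

Lemma harm_max (f : 'I_N -> R) : (forall i, \sum_j K i j * f j = f i) ->
  exists m, (forall j, f j <= m) /\ forall c, c \in C -> f c = m.
Proof.
move=> hf; have [im Him] := ex_max _ _ f c0; exists (f im); split => //.
pose S := [set i | f i == f im].
have cS : closed_set K S.
  move=> i j; rewrite !inE => /eqP fi Kij.
  have hs : \sum_k K i k * (f im - f k) = 0.
    rewrite (eq_bigr (fun k => K i k * f im - K i k * f k)); last by move=> *; rewrite mulrBr.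
    by rewrite sumrB -big_distrl /= hf (proj2 hK) mul1r fi subrr.
  have h : K i j * (f im - f j) = 0.
    by apply: (psumr_eq0P _ hs) => // k _; apply: mulr_ge0; [exact: (proj1 hK) | rewrite subr_ge0].
  move/eqP: h; rewrite mulf_eq0 (gt_eqF Kij) /= subr_eq0 => /eqP <-.
  by [].
have := @closed_contains _ _ K S C im cS (_ : im \in S) uC.
rewrite inE eqxx => /(_ isT) /subsetP sub c cC.
by have := sub c cC; rewrite inE => /eqP.
Qed.

Lemma harm_const (f : 'I_N -> R) : (forall i, \sum_j K i j * f j = f i) ->
  forall i, f i = f c0.
Proof.
move=> hf; have [m [hm1 hm2]] := harm_max _ hf.
have hf' : forall i, \sum_j K i j * (- f j) = - f i.
  by move=> i; rewrite -hf -sumrN; apply: eq_bigr => j _; rewrite mulrN.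
have [m' [hm1' hm2']] := harm_max _ hf'.
move=> i; apply/eqP; rewrite eq_le.
have e : - m = m' by rewrite -(hm2 _ c0C) hm2'.
rewrite (hm2 _ c0C) hm1 /= -lerN2 e; exact: hm1'.
Qed.
End H.

Theorem corollary3p4 (R : realFieldType) (N : nat) (K : 'M[R]_N) (mu : 'rV[R]_N)
    (p : 'I_N -> R)
    (hK : stochastic K) (hU : unique_closed_irreducible K)
    (hmu : stationary_distribution K mu)
    (hp : forall i, 0 < p i < 1) :
  let pcol : 'cV[R]_N := \col_i p i in
  let one : 'cV[R]_N := const_mx 1 in
  let Dp : 'M[R]_N := diag_mx (\row_i p i) in
  let D1p : 'M[R]_N := diag_mx (\row_i (1 - p i)) in
  let pbar : R := (mu *m pcol) 0 0 in
  let lambda : R := pbar / (1 - pbar) in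
  let pi : 'rV[R]_N := (1 + lambda) *: (mu *m (1%:M - Dp *m K)) in
  let M : 'M[R]_N :=
    1%:M - K + (1 - pbar)^-1 *: ((one - pcol) *m (mu *m D1p *m K)) in
  let r : 'cV[R]_N := invmx M *m pcol - lambda *: one in
  M \in unitmx /\ pi *m r = 0.
Proof.
move=> pcol one Dp D1p pbar lambda pi M r.
have [Kpos Ksum] := hK; have [mupos [musum muK]] := hmu.
case: hU => C [[cC iC] uC].
have [c0 c0C] : exists c0, c0 \in C by case: iC => /set0Pn.
have hKone : K *m one = one.
  apply/matrixP => i j; rewrite !mxE -(Ksum i); apply: eq_bigr => k _.
  by rewrite mxE mulr1.
have hmuone : mu *m one = 1%:M.
  apply/matrixP => i j; rewrite !ord1 !mxE eqxx /= -musum; apply: eq_bigr => k _.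
  by rewrite mxE mulr1.
have hpbar : mu *m pcol = pbar%:M by rewrite {1}[mu *m pcol]mx11_scalar.
have hD1p : D1p = 1%:M - Dp.
  apply/matrixP => i j; rewrite !mxE; case: (i =P j) => _ /=.
    by rewrite !mulr1n.
  by rewrite !mulr0n subr0.
have hDpone : Dp *m one = pcol.
  by rewrite mul_diag_mx; apply/matrixP => i j; rewrite !mxE mulr1 //=.
have hD1pone : D1p *m one = one - pcol by rewrite hD1p mulmxBl mul1mx hDpone.
have hpbar1 : 1 - pbar != 0.
  have e : 1 - pbar = \sum_i mu 0 i * (1 - p i).
    rewrite /pbar mxE -{1}musum -sumrB; apply: eq_bigr => k _.

    by rewrite mxE mulrBr mulr1.
  rewrite e; apply/eqP => h.
  have h0 : forall i, mu 0 i = 0.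
    move=> i.
    have hnn : forall k, true -> 0 <= mu 0 k * (1 - p k).
      by move=> k _; apply: mulr_ge0 => //; have := hp k; rewrite subr_ge0 => /andP [_ /ltW].
    move: (@psumr_eq0P _ _ _ _ hnn h i isT) => /eqP.
    rewrite mulf_eq0 => /orP [/eqP //|]; rewrite subr_eq0; have := hp i.
    by case/andP => _ /gt_eqF ->.
  move: musum; rewrite big1 => [|i _]; last exact: h0.
  by move/eqP; rewrite eq_sym oner_eq0.
set v := mu *m D1p *m K.
have hmuM : mu *m M = v.
  rewrite /M mulmxDr  mulmxBr mulmx1 muK subrr add0r -scalemxAr (mulmxA mu (one - pcol)).
  rewrite mulmxBr hmuone hpbar -smxB mul_scalar_mx scalerA mulVf //.
  by rewrite scale1r.
have hw : mu *m (1%:M - Dp *m K) = v.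
  by rewrite /v hD1p !mulmxBr !mulmxBl mulmx1 muK mulmxA.
have hvone : v *m one = (1 - pbar)%:M.
  by rewrite /v -!mulmxA hKone hD1pone mulmxBr hmuone hpbar smxB.
have hunit : M \in unitmx.
  rewrite -unitmx_tr; apply: unit_of_ker => x hx.
  have hy : M *m x^T = 0 by rewrite -[M]trmxK -trmx_mul hx trmx0.
  set y := x^T in hy.
  have hvy : v *m y = 0 by rewrite -hmuM -mulmxA hy mulmx0.
  have hKy : K *m y = y.
    move: hy; rewrite /M mulmxDl mulmxBl mul1mx -scalemxAl -mulmxA hvy.
    rewrite mulmx0 scaler0 addr0 => /eqP; rewrite subr_eq0 => /eqP; done.
  have hf : forall i, \sum_j K i j * y j 0 = y i 0.
    by move=> i; have := congr1 (fun A : 'cV[R]_N => A i 0) hKy; rewrite mxE.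
  have hc := @harm_const _ _ K hK C c0 c0C uC _ hf.
  have ey : y = (y c0 0) *: one.
    by apply/matrixP => i j; rewrite (ord1 j) [in RHS]mxE [const_mx _ _ _]mxE mulr1 hc.
  move: hvy; rewrite ey -scalemxAr hvone scale_scalar_mx.
  move=> /(congr1 (fun A : 'M[R]_1 => A 0 0)); rewrite !mxE /= mulr1n => /eqP.
  rewrite mulf_eq0 (negbTE hpbar1) orbF => /eqP y0.
  have y0' : y c0 0 = 0 by rewrite mxE.
  by rewrite -[x]trmxK -/y ey y0' scale0r trmx0.
split => //.
rewrite /pi /r -scalemxAl hw mulmxBr -scalemxAr hvone -hmuM -mulmxA.
rewrite mulKVmx // hpbar scale_scalar_mx /lambda divfK // subrr scaler0 //.
Qed.
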